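(* Let $n\ge1$, $K\in\mathcal S_n$, $x\in\partial K$ and $u\in N_K(x)$. Then for $y=x-u$ we have $K\subseteq B(x-u,1)$, i.e. $y\in\partial K^c$. Moreover $-u\in N_{K^c}(y)$.
   Context: $B(x,r)$ is the closed Euclidean ball. For $A\subseteq\mathbb R^n$, $A^c=\bigcap_{x\in A}B(x,1)$ (with $\emptyset^c=\mathbb R^n$). $\mathcal S_n$ is the class of all sets of the form $\bigcap_{x\in A}B(x,1)$, $A\subseteq\mathbb R^n$. For a convex body $T$ and $z\in\partial T$, $N_T(z)$ denotes the set of unit outer normals of $T$ at $z$ (the outer normal cone at $z$ intersected with the unit sphere). *)

(* Defs.v *)
From mathcomp Require Import all_boot all_order all_algebra.
From mathcomp Require Import boolp classical_sets reals.
Set Implicit Arguments. Unset Strict Implicit. Unset Printing Implicit Defensive.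
Import Order.TTheory GRing.Theory Num.Theory.
Local Open Scope ring_scope.
Local Open Scope classical_set_scope.

Section Defs.
Variables (R : realType) (n : nat).
Notation V := 'rV[R]_n.

Definition dotv (u v : V) : R := \sum_(i < n) u ord0 i * v ord0 i.

Definition cball (x : V) (r : R) : set V :=
  [set y | dotv (y - x) (y - x) <= r ^+ 2].

(* A^c = intersection of B(a,1) over a in A (empty A gives the whole space) *)
Definition ccomp (A : set V) : set V :=
  [set y | forall a, A a -> cball a 1 y].

Definition in_Sn (K : set V) : Prop := exists A : set V, K = ccomp A.

Definition bdry (S : set V) (x : V) : Prop :=
  forall e : R, 0 < e ->
    (exists y, S y /\ dotv (y - x) (y - x) < e ^+ 2) /\
    (exists z, ~ S z /\ dotv (z - x) (z - x) < e ^+ 2).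

Definition unit_normal (T : set V) (z u : V) : Prop :=
  dotv u u = 1 /\ forall w, T w -> dotv u (w - z) <= 0.

End Defs.

(* Main.v *)
Require Import Defs.
From mathcomp Require Import all_boot all_order all_algebra.
From mathcomp Require Import boolp classical_sets reals.
From mathcomp Require Import ring lra.
Import Order.TTheory GRing.Theory Num.Theory.
Set Implicit Arguments. Unset Strict Implicit.
Local Open Scope ring_scope.
Local Open Scope classical_set_scope.

Section Dot.
Variables (R : realType) (n : nat).
Notation V := 'rV[R]_n.
Implicit Types u v w : V.

Lemma dotvDl u v w : dotv (u + v) w = dotv u w + dotv v w.
Proof. by rewrite /dotv -big_split; apply: eq_bigr => i _; rewrite mxE mulrDl. Qed.
Lemma dotvC u v : dotv u v = dotv v u.
Proof. by rewrite /dotv; apply: eq_bigr => i _; rewrite mulrC. Qed.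
Lemma dotvDr u v w : dotv w (u + v) = dotv w u + dotv w v.
Proof. by rewrite dotvC dotvDl !(dotvC w). Qed.
Lemma dotvZl a u v : dotv (a *: u) v = a * dotv u v.
Proof. by rewrite /dotv mulr_sumr; apply: eq_bigr => i _; rewrite mxE mulrA. Qed.
Lemma dotvZr a u v : dotv v (a *: u) = a * dotv v u.
Proof. by rewrite dotvC dotvZl dotvC. Qed.
Lemma dotvNl u v : dotv (- u) v = - dotv u v.
Proof. by rewrite -scaleN1r dotvZl mulN1r. Qed.
Lemma dotvNr u v : dotv v (- u) = - dotv v u.
Proof. by rewrite dotvC dotvNl dotvC. Qed.
Lemma dotv_ge0 u : 0 <= dotv u u.
Proof. by apply: sumr_ge0 => i _; rewrite -expr2 sqr_ge0. Qed.
Lemma dotv0 : dotv (0 : V) 0 = 0.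
Proof. by rewrite /dotv big1 // => i _; rewrite mxE mul0r. Qed.
End Dot.

Ltac dexp := rewrite ?(dotvDl, dotvDr, dotvZl, dotvZr, dotvNl, dotvNr).
Lemma tri (R : realType) (n : nat) (c b : 'rV[R]_n) (e : R) : 0 < e ->
  dotv c c < e ^+ 2 -> dotv b b <= 1 ->
  dotv (b + c) (b + c) < (1 + e) ^+ 2.
Proof.
move=> e0 hc hb.
have hcs := dotv_ge0 (c - e *: b).
move: hcs; dexp; rewrite ?(dotvC b c) => hcs.
rewrite -(ltr_pM2l e0); dexp; rewrite ?(dotvC b c). nra.
Qed.

Lemma closed_ccomp (R : realType) (n : nat) (A : set 'rV[R]_n) x :
  bdry (ccomp A) x -> ccomp A x.
Proof.
move=> hb a Aa; rewrite /cball /= expr1n.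
set T := dotv (x - a) (x - a).
rewrite leNgt; apply/negP => hT.
pose e := Num.min 1 ((T - 1) / 4).
have e0 : 0 < e by rewrite lt_min ltr01 /= divr_gt0 // subr_gt0.
have e1 : e <= 1 by rewrite ge_min lexx.
have eT : e <= (T - 1) / 4 by rewrite ge_min lexx orbT.
have [[y [Ky hy]] _] := hb e e0.
have := Ky a Aa; rewrite /cball /= expr1n => hya.
have hxa : x - a = (y - a) + (x - y).
  by apply/matrixP => i j; rewrite !mxE; ring.
have hxy : y - x = - (x - y).
  by apply/matrixP => i j; rewrite !mxE; ring.
move: hy; rewrite hxy dotvNl dotvNr opprK => hy.
have := tri e0 hy hya; rewrite -hxa -/T => h.
have e4 : 4 * e <= T - 1 by move: eT; rewrite ler_pdivlMr //; lra.
nra.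
Qed.
Lemma key (R : realType) (D m b s B P Q : R) : 0 < D -> 0 < b -> b <= 1 ->
  B <= 1 -> D + 2 * P + B <= 1 ->
  0 <= s ^+ 2 - 2 * s * (D / 2) * Q + (D / 2) ^+ 2 * B ->
  (D / 2) ^+ 2 + s ^+ 2 + b * (D / 2) * (s ^+ 2 - 2 * s * m + D) <= D * (D / 2) ->
  b ^+ 2 * D - 2 * b ^+ 2 * s * m + b ^+ 2 * s ^+ 2 + 2 * b * P + 2 * b * s * Q + B <= 1.
Proof.
move=> D0 b0 b1 B1 hP hQ hc.
set g := D / 2 in hQ hc *.
have g0 : 0 < g by rewrite /g divr_gt0.
have hD : D = 2 * g by rewrite /g; field.
rewrite hD in hP hc *.
rewrite -(ler_pM2l g0) mulr1.
have h1 := mulr_ge0 (ltW b0) hQ.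
have h2 : 0 <= b * g * (1 - 2 * g - 2 * P - B).
  by apply: mulr_ge0; [apply: mulr_ge0; lra | lra].
have h3 : 0 <= (1 - B) * g * (1 - b + b * g).
  apply: mulr_ge0; [apply: mulr_ge0; lra|]. nra.
have h4 : 0 <= b * (2 * g * g - (g ^+ 2 + s ^+ 2 + b * g * (s ^+ 2 - 2 * s * m + 2 * g))).
  by apply: mulr_ge0; lra.
nra.
Qed.

Lemma choose_params (R : realType) (D m : R) : 0 < D -> 0 <= m -> 2 * m < D ->
  exists s b : R, [/\ m < s, 0 < b, b <= 1 &
  (D / 2) ^+ 2 + s ^+ 2 + b * (D / 2) * (s ^+ 2 - 2 * s * m + D) <= D * (D / 2)].
Proof.
move=> D0 m0 hm.
pose s := m / 2 + D / 4.
pose S := D * (D / 2) - (D / 2) ^+ 2 - s ^+ 2.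
pose M := (D / 2) * (s ^+ 2 + D) + 1.
have s0 : 0 <= s by rewrite /s; apply: addr_ge0; apply: divr_ge0; lra.
have sD : s < D / 2 by rewrite /s; lra.
have S0 : 0 < S.
  rewrite /S; have -> : D * (D / 2) - (D / 2) ^+ 2 = (D / 2) ^+ 2 by field.
  rewrite subr_gt0; nra.
have M0 : 0 < M by rewrite /M; apply: ltr_wpDl; [apply: mulr_ge0; nra | lra].
exists s, (Num.min 1 (S / M)); split.
- rewrite /s; lra.
- by rewrite lt_min ltr01 divr_gt0.
- by rewrite ge_min lexx.
set b := Num.min 1 (S / M).
have b0 : 0 <= b by rewrite le_min ler01 divr_ge0 // ltW.
have bM : b * M <= S by rewrite -ler_pdivlMr // ge_min lexx orbT.
have : b * (D / 2) * (s ^+ 2 - 2 * s * m + D) <= b * M.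
  rewrite -mulrA ler_wpM2l // /M.
  have : 0 <= s * m by apply: mulr_ge0.
  have : 0 < D / 2 by apply: divr_gt0.
  nra.
rewrite /S in bM; lra.
Qed.

Theorem lemma1p24 (R : realType) (n : nat) (K : set 'rV[R]_n) (x u : 'rV[R]_n) :
  (0 < n)%N -> in_Sn K -> bdry K x -> unit_normal K x u ->
  [/\ K `<=` cball (x - u) 1,
      bdry (ccomp K) (x - u)
    & unit_normal (ccomp K) (x - u) (- u)].
Proof.
move=> _ [A ->] hb [hu hN].
have xK := closed_ccomp hb.
have P1 : ccomp A `<=` cball (x - u) 1.
  move=> w wK; rewrite /cball /= expr1n leNgt; apply/negP => hgt.
  have [d hd] : exists d, d = w - x by eexists.
  have hwc : w - (x - u) = d + u by rewrite hd; apply/matrixP => i j; rewrite !mxE; ring.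
  move: hgt; rewrite hwc; dexp; rewrite hu (dotvC d u) => hgt.
  have hNw := hN w wK; rewrite -hd in hNw.
  set D := dotv d d in hgt.
  set m := - dotv u d.
  have m0 : 0 <= m by rewrite /m oppr_ge0.
  have hm : 2 * m < D by rewrite /m; lra.
  have D0 : 0 < D by lra.
  have [s [b [hs b0 b1 hc]]] := choose_params D0 m0 hm.
  have [p hp] : exists p, p = x + b *: d + (b * s) *: u by eexists.
  have pK : ccomp A p.
    move=> a Aa; rewrite /cball /= expr1n.
    have [c hc'] : exists c, c = x - a by eexists.
    have hpa : p - a = b *: d + (b * s) *: u + c.
      by rewrite hc' hp; apply/matrixP => i j; rewrite !mxE; ring.
    have hwa : w - a = d + c.
      by rewrite hd hc'; apply/matrixP => i j; rewrite !mxE; ring.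
    rewrite hpa.
    have := xK a Aa; rewrite /cball /= -hc' expr1n => B1.
    have := wK a Aa; rewrite /cball /= hwa expr1n; dexp; rewrite ?(dotvC c d) -/D => W1.
    have := dotv_ge0 (s *: u - (D / 2) *: c); dexp; rewrite ?(dotvC c u) hu => hQ.
    dexp; rewrite ?(dotvC c d) ?(dotvC c u) ?(dotvC d u) ?hu -?/D.
    have hmu : dotv u d = - m by rewrite /m opprK.
    rewrite hmu.
    have hP' : D + 2 * dotv d c + dotv c c <= 1 by lra.
    have hQ' : 0 <= s ^+ 2 - 2 * s * (D / 2) * dotv u c + (D / 2) ^+ 2 * dotv c c.
      by move: hQ; rewrite !expr2; lra.
    have h := @key R D m b s (dotv c c) (dotv d c) (dotv u c) D0 b0 b1 B1 hP' hQ' hc.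
    move: h; rewrite !expr2; lra.
  have := hN p pK.
  have -> : p - x = b *: d + (b * s) *: u.
    by rewrite hp; apply/matrixP => i j; rewrite !mxE; ring.
  dexp; rewrite hu.
  have hmu : dotv u d = - m by rewrite /m opprK.
  rewrite hmu => h.
  have : 0 < b * (s - m) by apply: mulr_gt0; lra.
  lra.
split => //.
- move=> e e0; split.
  + exists (x - u); split.
      move=> k Kk; have := P1 k Kk; rewrite /cball /=.
      have -> : x - u - k = - (k - (x - u)).
        by apply/matrixP => i j; rewrite !mxE; ring.
      by rewrite dotvNl dotvNr opprK.
    by rewrite subrr dotv0 exprn_gt0.
  + exists (x - u - (e / 2) *: u); split.
      move=> h; have := h x xK; rewrite /cball /=.
      have -> : x - u - (e / 2) *: u - x = (- (1 + e / 2)) *: u.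
        by apply/matrixP => i j; rewrite !mxE; ring.
      dexp; rewrite hu expr1n; apply/negP; rewrite -ltNge.
      have : 0 < e / 2 by apply: divr_gt0.
      nra.
    have -> : x - u - (e / 2) *: u - (x - u) = (- (e / 2)) *: u.
      by apply/matrixP => i j; rewrite !mxE; ring.
    dexp; rewrite hu.
    have : 0 < e / 2 by apply: divr_gt0.
    nra.
- split; first by rewrite dotvNl dotvNr opprK.
  move=> w wK.
  have [d hd] : exists d, d = w - x by eexists.
  have := wK x xK; rewrite /cball /= -hd expr1n => hw.
  have -> : w - (x - u) = d + u by rewrite hd; apply/matrixP => i j; rewrite !mxE; ring.
  have := dotv_ge0 (u + d); dexp; rewrite hu (dotvC d u) => h.
  lra.
Qed.
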